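(* Assume the standing assumptions below, let $\gamma\in[0,\gamma_* )$, and let $U(\cdot;\gamma)$ be the finite wavefront with speed $c(\gamma)$ normalized so that its support is $(-\infty,0]$. Let $V(\xi;\gamma):=\frac{m}{m-\alpha}U(\xi;\gamma)^{m-\alpha}$. Then $$\lim_{\xi\to0^-}V'(\xi;\gamma)=-c(\gamma)^\alpha,\qquad \lim_{\xi\to0^-}V''(\xi;\gamma)=\frac{(\gamma c(\gamma)-h'(0))(m-\alpha)}{(p-1)(m-\alpha+1)c(\gamma)^{1-\alpha}},$$ $$\lim_{\xi\to0^-}\big(|V'|^{p-2}V'\big)'(\xi;\gamma)=\frac{(\gamma c(\gamma)-h'(0))(m-\alpha)}{m-\alpha+1}.$$
   Context: Standing assumptions: $m>0$, $p>1$ with $m(p-1)>1$; $\alpha:=1/(p-1)$. $h\in C^1([0,\infty))$ satisfies $h(0)=0$, and for some $a\in[0,1)$: $h\le0$ on $[0,a]$, $h>0$ on $(a,1)$, $h<0$ on $(1,\infty)$, $h'(1)<0$; if $a>0$ also $\int_0^1h(u)u^{m-1}du>0$. For $\gamma\in[0,\gamma_* )$ ($\gamma_*>0$ small), $c(\gamma)>0$ denotes the unique speed for which the one-dimensional equation $u_t=(|(u^m)_r|^{p-2}(u^m)_r)_r+\gamma|(u^m)_r|^{p-2}(u^m)_r+h(u)$ has a finite wavefront, i.e. a travelling wave $U(r-ct)$ with $U$ continuous, nonincreasing, $U(-\infty)=1$, $U=0$ on some $[\xi_0,\infty)$ and $U>0$ on $(-\infty,\xi_0)$; it is unique up to translation,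 and smooth where positive. *)

(* Defs.v *)
From Stdlib Require Import Reals Lra.
From Coquelicot Require Import Coquelicot.
Open Scope R_scope.

(* x^y for x >= 0 and y > 0, with the convention 0^y = 0
   (Stdlib's Rpower 0 y = 1, which is not what we want). *)
Definition rpow (x y : R) : R := if Rlt_dec 0 x then Rpower x y else 0.

Definition phip (p s : R) : R :=
  if Rlt_dec 0 s then Rpower s (p - 1)
  else if Rlt_dec s 0 then - Rpower (- s) (p - 1) else 0.

Definition flux (m p : R) (U : R -> R) (x : R) : R :=
  phip p (Derive (fun y => rpow (U y) m) x).

Definition test_fun (phi : R -> R) (a b : R) : Prop :=
  a < b /\ (forall x, (x <= a \/ b <= x) -> phi x = 0) /\
  (forall x, ex_derive phi x /\ continuous (Derive phi) x).

(* U(r - c t) is a weak solution of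
     u_t = (|(u^m)_r|^{p-2}(u^m)_r)_r + gamma |(u^m)_r|^{p-2}(u^m)_r + h(u),
   i.e. in the travelling coordinate xi = r - c t:
     -c U' = Phi' + gamma Phi + h(U),  Phi = |(U^m)'|^{p-2}(U^m)',
   tested against C^1 compactly supported test functions. *)
Definition tw_weak_solution (m p gamma : R) (h : R -> R) (c : R) (U : R -> R) : Prop :=
  forall phi a b, test_fun phi a b ->
    ex_RInt (fun x => U x * Derive phi x) a b /\
    ex_RInt (fun x => flux m p U x * Derive phi x) a b /\
    ex_RInt (fun x => flux m p U x * phi x) a b /\
    ex_RInt (fun x => h (U x) * phi x) a b /\
    c * RInt (fun x => U x * Derive phi x) a b =
      - RInt (fun x => flux m p U x * Derive phi x) a b
      + gamma * RInt (fun x => flux m p U x * phi x) a b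
      + RInt (fun x => h (U x) * phi x) a b.

Definition finite_wavefront_at (m p gamma : R) (h : R -> R) (c : R) (U : R -> R)
    (xi0 : R) : Prop :=
  (forall x, continuous U x) /\
  (forall x y, x <= y -> U y <= U x) /\
  filterlim U (Rbar_locally m_infty) (locally 1) /\
  (forall x, xi0 <= x -> U x = 0) /\
  (forall x, x < xi0 -> 0 < U x) /\
  tw_weak_solution m p gamma h c U.

Definition finite_wavefront (m p gamma : R) (h : R -> R) (c : R) (U : R -> R) : Prop :=
  exists xi0, finite_wavefront_at m p gamma h c U xi0.

Definition C1_nonneg (h dh : R -> R) : Prop :=
  (forall u, 0 <= u ->
     filterlim (fun v => (h v - h u) / (v - u))
       (within (fun v => 0 <= v /\ v <> u) (locally u)) (locally (dh u))) /\
  (forall u, 0 <= u ->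
     filterlim dh (within (fun v => 0 <= v) (locally u)) (locally (dh u))).

Definition reaction_hyp (m : R) (h dh : R -> R) : Prop :=
  C1_nonneg h dh /\ h 0 = 0 /\
  exists a, 0 <= a < 1 /\
    (forall u, 0 <= u <= a -> h u <= 0) /\
    (forall u, a < u < 1 -> 0 < h u) /\
    (forall u, 1 < u -> h u < 0) /\
    dh 1 < 0 /\
    (0 < a -> 0 < RInt (fun u => h u * rpow u (m - 1)) 0 1).

Definition wavefront_hyp (m p : R) (h : R -> R) (gstar : R) : Prop :=
  forall gamma, 0 <= gamma < gstar ->
    (exists c, 0 < c /\ (exists U, finite_wavefront m p gamma h c U) /\
       forall c', (exists U, finite_wavefront m p gamma h c' U) -> c' = c) /\
    (forall c U1 U2, finite_wavefront m p gamma h c U1 ->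
       finite_wavefront m p gamma h c U2 -> exists s, forall x, U2 x = U1 (x + s)) /\
    (forall c U xi0, finite_wavefront_at m p gamma h c U xi0 ->
       forall k x, x < xi0 -> ex_derive_n U k x).

(* Main.v *)
Require Import Defs.
From Stdlib Require Import Reals Lra.
From Coquelicot Require Import Coquelicot.
Open Scope R_scope.

Lemma ball_R (x e y : R) : ball x e y <-> Rabs (y - x) < e.
Proof. unfold ball; simpl; unfold AbsRing_ball, abs, minus, plus, opp; simpl. tauto. Qed.

Ltac rball H := apply (proj1 (ball_R _ _ _)) in H; unfold minus, plus, opp in H; simpl in H; apply Rabs_def2 in H.

Lemma cont_eps (g : R -> R) l : continuous g l ->
  forall eps, 0 < eps -> exists d, 0 < d /\ forall y, Rabs (y - l) < d -> Rabs (g y - g l) < eps.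
Proof.
  intros Hg eps He.
  destruct (Hg (ball (g l) eps)) as [d Hd].
  { exists (mkposreal eps He). intros y Hy. exact Hy. }
  exists d; split; [apply cond_pos|]. intros y Hy.
  apply (proj2 (ball_R _ _ _)). apply Hd. apply (proj2 (ball_R _ _ _)). exact Hy.
Qed.

Lemma eps_cont (g : R -> R) l :
  (forall eps, 0 < eps -> exists d, 0 < d /\ forall y, Rabs (y - l) < d -> Rabs (g y - g l) < eps) ->
  continuous g l.
Proof.
  intros H P [eps HP].
  destruct (H eps (cond_pos eps)) as [d [Hd Hd']].
  exists (mkposreal d Hd). intros y Hy. apply HP. apply (proj2 (ball_R _ _ _)). apply Hd'. apply (proj2 (ball_R _ _ _)). exact Hy.
Qed.

Definition LL (f : R -> R) (l : R) : Prop :=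
  forall eps, 0 < eps -> exists d, 0 < d /\ forall x, -d < x < 0 -> Rabs (f x - l) < eps.

Lemma LL_filterlim f l : LL f l -> filterlim f (at_left 0) (locally l).
Proof.
  intros H P [eps HP].
  destruct (H eps (cond_pos eps)) as [d [Hd Hd']].
  exists (mkposreal d Hd). intros y Hy Hy0. apply HP. apply (proj2 (ball_R _ _ _)).
  apply Hd'. apply (proj1 (ball_R _ _ _)) in Hy. simpl in Hy.
  apply Rabs_def2 in Hy. unfold minus, plus, opp in Hy; simpl in Hy. lra.
Qed.

Lemma LL_ext f g l : (exists d, 0 < d /\ forall x, -d < x < 0 -> f x = g x) -> LL f l -> LL g l.
Proof.
  intros [d0 [Hd0 E]] H eps He. destruct (H eps He) as [d [Hd Hd']].
  exists (Rmin d d0). split. apply Rmin_pos; lra.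
  intros x Hx. rewrite <- E. apply Hd'.
  pose proof (Rmin_l d d0); pose proof (Rmin_r d d0); lra.
  pose proof (Rmin_l d d0); pose proof (Rmin_r d d0); lra.
Qed.

Lemma LL_const l : LL (fun _ => l) l.
Proof. intros eps He. exists 1. split. lra. intros. rewrite Rminus_eq_0, Rabs_R0. lra. Qed.

Lemma LL_id : LL (fun x => x) 0.
Proof. intros eps He. exists eps. split. lra. intros x Hx. rewrite Rminus_0_r, Rabs_left; lra. Qed.

Lemma LL_comp f g l : LL f l -> continuous g l -> LL (fun x => g (f x)) (g l).
Proof.
  intros Hf Hg eps He. destruct (cont_eps g l Hg eps He) as [d1 [Hd1 H1]].
  destruct (Hf d1 Hd1) as [d [Hd H2]]. exists d. split. lra.
  intros. apply H1. apply H2. auto.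
Qed.

Lemma LL_plus f g a b : LL f a -> LL g b -> LL (fun x => f x + g x) (a + b).
Proof.
  intros Hf Hg eps He.
  destruct (Hf (eps/2)) as [d1 [Hd1 H1]]. lra.
  destruct (Hg (eps/2)) as [d2 [Hd2 H2]]. lra.
  exists (Rmin d1 d2). split. apply Rmin_pos; lra.
  intros x Hx. pose proof (Rmin_l d1 d2); pose proof (Rmin_r d1 d2).
  specialize (H1 x ltac:(lra)). specialize (H2 x ltac:(lra)).
  replace (f x + g x - (a + b)) with ((f x - a) + (g x - b)) by ring.
  eapply Rle_lt_trans. apply Rabs_triang. lra.
Qed.

Lemma cont_mult2 a b : continuous (fun x : R * R => fst x * snd x) (a, b).
Proof.
  apply (continuous_mult (fun x : R*R => fst x) (fun x : R*R => snd x)).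
  apply continuous_fst. apply continuous_snd.
Qed.

Lemma LL_mult f g a b : LL f a -> LL g b -> LL (fun x => f x * g x) (a * b).
Proof.
  intros Hf Hg eps He.
  set (e1 := Rmin 1 (eps / (2 * (Rabs b + 1)))).
  set (e2 := eps / (2 * (Rabs a + 2))).
  assert (He1 : 0 < e1). { apply Rmin_pos. lra. apply Rdiv_lt_0_compat. lra. pose proof (Rabs_pos b); lra. }
  assert (He2 : 0 < e2). { apply Rdiv_lt_0_compat. lra. pose proof (Rabs_pos a); lra. }
  destruct (Hf e1 He1) as [d1 [Hd1 H1]]. destruct (Hg e2 He2) as [d2 [Hd2 H2]].
  exists (Rmin d1 d2). split. apply Rmin_pos; lra.
  intros x Hx. pose proof (Rmin_l d1 d2); pose proof (Rmin_r d1 d2).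
  specialize (H1 x ltac:(lra)). specialize (H2 x ltac:(lra)).
  replace (f x * g x - a * b) with ((f x - a) * (g x - b) + (f x - a) * b + a * (g x - b)) by ring.
  assert (Hfa : Rabs (f x - a) <= 1). { unfold e1 in H1. pose proof (Rmin_l 1 (eps / (2 * (Rabs b + 1)))). lra. }
  assert (Hfa2 : Rabs (f x - a) * (Rabs b + 1) <= eps / 2).
  { unfold e1 in H1. pose proof (Rmin_r 1 (eps / (2 * (Rabs b + 1)))).
    assert (HH : Rabs (f x - a) <= eps / (2 * (Rabs b + 1))) by lra.
    pose proof (Rabs_pos b).
    apply Rmult_le_compat_r with (r := Rabs b + 1) in HH; [|lra].
    replace (eps / (2 * (Rabs b + 1)) * (Rabs b + 1)) with (eps / 2) in HH by (field; lra). lra. }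
  assert (Hgb2 : Rabs (g x - b) * (Rabs a + 2) < eps / 2).
  { pose proof (Rabs_pos a).
    apply Rmult_lt_compat_r with (r := Rabs a + 2) in H2; [|lra].
    unfold e2 in H2. replace (eps / (2 * (Rabs a + 2)) * (Rabs a + 2)) with (eps / 2) in H2 by (field; lra). lra. }
  pose proof (Rabs_pos (f x - a)); pose proof (Rabs_pos (g x - b)); pose proof (Rabs_pos a); pose proof (Rabs_pos b).
  eapply Rle_lt_trans. apply Rabs_triang. eapply Rle_lt_trans. apply Rplus_le_compat_r. apply Rabs_triang.
  rewrite !Rabs_mult. nra.
Qed.

Lemma LL_inv f a : LL f a -> a <> 0 -> LL (fun x => / f x) (/ a).
Proof.
  intros Hf Ha. apply (LL_comp f (fun y => / y) a Hf).
  apply continuity_pt_filterlim. apply continuity_pt_inv. apply continuity_pt_id. exact Ha.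
Qed.

Lemma LL_unique f a b : LL f a -> LL f b -> a = b.
Proof.
  intros Ha Hb. destruct (Req_dec a b) as [|Hne]; auto. exfalso.
  set (e := Rabs (a - b) / 2). assert (He : 0 < e). { unfold e. assert (a - b <> 0) by lra. apply Rabs_pos_lt in H. lra. }
  destruct (Ha e He) as [d1 [Hd1 H1]]. destruct (Hb e He) as [d2 [Hd2 H2]].
  set (x := - Rmin d1 d2 / 2). pose proof (Rmin_l d1 d2); pose proof (Rmin_r d1 d2).
  assert (0 < Rmin d1 d2) by (apply Rmin_pos; lra).
  specialize (H1 x ltac:(unfold x; lra)). specialize (H2 x ltac:(unfold x; lra)).
  assert (Rabs (a - b) <= Rabs (f x - b) + Rabs (f x - a)).
  { replace (a - b) with ((f x - b) - (f x - a)) by ring. eapply Rle_trans. apply Rabs_triang. rewrite Rabs_Ropp. lra. }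
  unfold e in *. lra.
Qed.

Lemma is_derive_Rpower x y : 0 < x -> is_derive (fun x => Rpower x y) x (y * Rpower x (y - 1)).
Proof. intros H. apply is_derive_Reals. apply derivable_pt_lim_power. exact H. Qed.

Lemma Rpower_pos x y : 0 < Rpower x y.
Proof. unfold Rpower. apply exp_pos. Qed.

Lemma Rpower_cont x y : 0 < x -> continuous (fun x => Rpower x y) x.
Proof. intros H. apply (ex_derive_continuous (K:=R_AbsRing) (V:=R_NormedModule) (fun x => Rpower x y) x). eexists. apply is_derive_Rpower. exact H. Qed.

Lemma rpow_pos x y : 0 < x -> rpow x y = Rpower x y.
Proof. intros H. unfold rpow. destruct (Rlt_dec 0 x); [auto|lra]. Qed.

Lemma rpow_0 y : rpow 0 y = 0.
Proof. unfold rpow. destruct (Rlt_dec 0 0); [lra|auto]. Qed.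

Lemma Rpower_small y : 0 < y -> forall eps, 0 < eps -> exists d, 0 < d /\ forall u, 0 < u < d -> Rpower u y < eps.
Proof.
  intros Hy eps He. exists (Rpower eps (/ y)). split. apply Rpower_pos.
  intros u Hu. replace eps with (Rpower (Rpower eps (/ y)) y).
  apply Rlt_Rpower_l; lra.
  rewrite Rpower_mult. rewrite Rinv_l by lra. apply Rpower_1. exact He.
Qed.

Lemma rpow_small y : 0 < y -> forall eps, 0 < eps -> exists d, 0 < d /\ forall u, 0 <= u < d -> Rabs (rpow u y) < eps.
Proof.
  intros Hy eps He. destruct (Rpower_small y Hy eps He) as [d [Hd H]]. exists d; split; auto.
  intros u Hu. destruct (Req_dec u 0) as [->|Hu0].
  rewrite rpow_0, Rabs_R0; auto.
  rewrite rpow_pos by lra. rewrite Rabs_right. apply H; lra. left; apply Rpower_pos.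
Qed.

Lemma Rpower_inv_pow x a : 0 < x -> 0 < a -> Rpower (Rpower x a) (/ a) = x.
Proof. intros. rewrite Rpower_mult, Rinv_r by lra. apply Rpower_1; auto. Qed.

Lemma phip_neg p s : s < 0 -> phip p s = - Rpower (- s) (p - 1).
Proof. intros H. unfold phip. destruct (Rlt_dec 0 s); [lra|]. destruct (Rlt_dec s 0); [auto|lra]. Qed.
Lemma phip_pos p s : 0 < s -> phip p s = Rpower s (p - 1).
Proof. intros H. unfold phip. destruct (Rlt_dec 0 s); [auto|lra]. Qed.
Lemma phip_0 p : phip p 0 = 0.
Proof. unfold phip. destruct (Rlt_dec 0 0); [lra|]. destruct (Rlt_dec 0 0); [lra|auto]. Qed.
Lemma phip_nonneg p s : 0 <= s -> 0 <= phip p s.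
Proof. intros [H|<-]. rewrite phip_pos; auto. left; apply Rpower_pos. rewrite phip_0; lra. Qed.

Lemma phip_abs p s : Rabs (phip p s) = rpow (Rabs s) (p - 1).
Proof.
  destruct (Rtotal_order s 0) as [H|[H|H]].
  rewrite phip_neg by lra; rewrite Rabs_Ropp, (Rabs_left s) by lra; rewrite rpow_pos by lra; apply Rabs_right; left; apply Rpower_pos.
  subst. rewrite phip_0, Rabs_R0, rpow_0. reflexivity.
  rewrite phip_pos by lra; rewrite (Rabs_right s) by lra; rewrite rpow_pos by lra; apply Rabs_right; left; apply Rpower_pos.
Qed.

Lemma phip_cont p s : 1 < p -> continuous (phip p) s.
Proof.
  intros Hp. destruct (Rtotal_order s 0) as [H|[H|H]].
  - apply continuous_ext_loc with (g := fun y => - Rpower (- y) (p - 1)).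
    exists (mkposreal (-s) ltac:(lra)). intros y Hy. rball Hy. simpl in Hy.
    rewrite phip_neg by lra. reflexivity.
    apply continuity_pt_filterlim. apply continuity_pt_opp.
    apply (continuity_pt_comp (fun y => - y) (fun y => Rpower y (p - 1))).
    apply continuity_pt_opp, continuity_pt_id. apply continuity_pt_filterlim. apply Rpower_cont. lra.
  - subst. apply eps_cont. intros eps He.
    destruct (rpow_small (p - 1) ltac:(lra) eps He) as [d [Hd H]]. exists d; split; auto.
    intros y Hy. rewrite phip_0, Rminus_0_r, phip_abs. eapply Rle_lt_trans; [apply Rle_abs|]. apply H. split. apply Rabs_pos. rewrite Rminus_0_r in Hy; auto.
  - apply continuous_ext_loc with (g := fun y => Rpower y (p - 1)).
    exists (mkposreal s ltac:(lra)). intros y Hy. rball Hy. simpl in Hy.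
    rewrite phip_pos by lra. reflexivity.
    apply Rpower_cont. lra.
Qed.

Lemma ex_RInt_cont (f : R -> R) a b : (forall z, Rmin a b <= z <= Rmax a b -> continuous f z) -> ex_RInt f a b.
Proof. intros H. apply (ex_RInt_continuous (V:=R_CompleteNormedModule)). exact H. Qed.

Lemma cont_pt (f : R -> R) x : continuity_pt f x -> continuous f x.
Proof. intros H. apply continuity_pt_filterlim. exact H. Qed.
Lemma pt_cont (f : R -> R) x : continuous f x -> continuity_pt f x.
Proof. intros H. apply continuity_pt_filterlim. exact H. Qed.

Lemma RInt_plusR (f g : R -> R) a b : ex_RInt f a b -> ex_RInt g a b -> RInt (fun x => f x + g x) a b = RInt f a b + RInt g a b.
Proof. intros. exact (RInt_plus f g a b H H0). Qed.
Lemma RInt_minusR (f g : R -> R) a b : ex_RInt f a b -> ex_RInt g a b -> RInt (fun x => f x - g x) a b = RInt f a b - RInt g a b.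
Proof. intros. exact (RInt_minus f g a b H H0). Qed.
Lemma RInt_scalR (f : R -> R) k a b : ex_RInt f a b -> RInt (fun x => k * f x) a b = k * RInt f a b.
Proof. intros. exact (RInt_scal f a b k H). Qed.
Lemma ex_RInt_plusR (f g : R -> R) a b : ex_RInt f a b -> ex_RInt g a b -> ex_RInt (fun x => f x + g x) a b.
Proof. intros. exact (ex_RInt_plus f g a b H H0). Qed.
Lemma ex_RInt_minusR (f g : R -> R) a b : ex_RInt f a b -> ex_RInt g a b -> ex_RInt (fun x => f x - g x) a b.
Proof. intros. exact (ex_RInt_minus f g a b H H0). Qed.
Lemma ex_RInt_scalR (f : R -> R) k a b : ex_RInt f a b -> ex_RInt (fun x => k * f x) a b.
Proof. intros. exact (ex_RInt_scal f a b k H). Qed.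
Lemma RInt_ChaslesR (f : R -> R) a b c : ex_RInt f a b -> ex_RInt f b c -> RInt f a b + RInt f b c = RInt f a c.
Proof. intros. exact (RInt_Chasles f a b c H H0). Qed.
Lemma split2R (f : R -> R) a b c : a <= b <= c -> ex_RInt f a c -> RInt f a c = RInt f a b + RInt f b c.
Proof. intros H E. rewrite RInt_ChaslesR; auto. apply (ex_RInt_Chasles_1 (V:=R_CompleteNormedModule) f a b c H E). apply (ex_RInt_Chasles_2 (V:=R_CompleteNormedModule) f a b c H E). Qed.
Lemma ex_RInt_sub (f : R -> R) a b c d : a <= c -> c <= d -> d <= b -> ex_RInt f a b -> ex_RInt f c d.
Proof. intros. apply (ex_RInt_Chasles_2 (V:=R_CompleteNormedModule) f a c d). lra. apply (ex_RInt_Chasles_1 (V:=R_CompleteNormedModule) f a d b). lra. auto. Qed.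
Lemma RInt_zero_onR (f : R -> R) a b : a <= b -> (forall x, a < x < b -> f x = 0) -> RInt f a b = 0.
Proof.
  intros Hab H. rewrite (RInt_ext f (fun _ => 0)). rewrite RInt_const.
  unfold scal; simpl; unfold mult; simpl. ring.
  intros x Hx. apply H. rewrite Rmin_left, Rmax_right in Hx; lra.
Qed.
Lemma RInt_extR (f g : R -> R) a b : a <= b -> (forall x, a < x < b -> f x = g x) -> RInt f a b = RInt g a b.
Proof. intros Hab H. apply RInt_ext. intros x Hx. apply H. rewrite Rmin_left, Rmax_right in Hx; lra. Qed.
Lemma ex_RInt_extR (f g : R -> R) a b : a <= b -> (forall x, a < x < b -> f x = g x) -> ex_RInt f a b -> ex_RInt g a b.
Proof. intros Hab H. apply ex_RInt_ext. intros x Hx. apply H. rewrite Rmin_left, Rmax_right in Hx; lra. Qed.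


Lemma within_eps {D : R -> Prop} (f : R -> R) u l :
  filterlim f (within D (locally u)) (locally l) ->
  forall eps, 0 < eps -> exists d, 0 < d /\ forall v, Rabs (v - u) < d -> D v -> Rabs (f v - l) < eps.
Proof.
  intros H eps He.
  destruct (H (ball l (mkposreal eps He))) as [d Hd].
  { exists (mkposreal eps He). auto. }
  exists d; split; [apply cond_pos|]. intros v Hv Dv.
  apply (proj1 (ball_R _ _ _)). apply Hd. apply (proj2 (ball_R _ _ _)). exact Hv. exact Dv.
Qed.

Lemma h_lip h dh : C1_nonneg h dh -> forall u, 0 <= u -> exists d K, 0 < d /\ 0 <= K /\
  forall v, 0 <= v -> Rabs (v - u) < d -> Rabs (h v - h u) <= K * Rabs (v - u).
Proof.
  intros [H1 _] u Hu. destruct (within_eps _ _ _ (H1 u Hu) 1 ltac:(lra)) as [d [Hd Hq]].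
  exists d, (Rabs (dh u) + 1). split; auto. split. pose proof (Rabs_pos (dh u)); lra.
  intros v Hv Hvu. destruct (Req_dec v u) as [->|Hne].
  rewrite !Rminus_eq_0, Rabs_R0. lra.
  specialize (Hq v Hvu (conj Hv Hne)).
  replace (h v - h u) with ((h v - h u) / (v - u) * (v - u)) by (field; lra).
  rewrite Rabs_mult. apply Rmult_le_compat_r. apply Rabs_pos.
  replace ((h v - h u) / (v - u)) with (((h v - h u) / (v - u) - dh u) + dh u) by ring.
  eapply Rle_trans. apply Rabs_triang. lra.
Qed.

Lemma hU_cont h dh (U : R -> R) : C1_nonneg h dh -> (forall x, continuous U x) -> (forall x, 0 <= U x) ->
  forall x, continuous (fun y => h (U y)) x.
Proof.
  intros Hh HUc HU0 x. apply eps_cont. intros eps He.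
  destruct (h_lip h dh Hh (U x) (HU0 x)) as [d [K [Hd [HK Hl]]]].
  destruct (cont_eps U x (HUc x) (Rmin d (eps / (K + 1)))) as [d2 [Hd2 H2]].
  { apply Rmin_pos; auto. apply Rdiv_lt_0_compat; lra. }
  exists d2; split; auto. intros y Hy. specialize (H2 y Hy).
  pose proof (Rmin_l d (eps / (K + 1))); pose proof (Rmin_r d (eps / (K + 1))).
  eapply Rle_lt_trans. apply Hl. apply HU0. lra.
  apply Rle_lt_trans with (K * (eps / (K + 1))).
  apply Rmult_le_compat_l; lra.
  apply Rlt_le_trans with ((K+1) * (eps / (K + 1))). apply Rmult_lt_compat_r. apply Rdiv_lt_0_compat; lra. lra.
  right. field. lra.
Qed.

Lemma h_quot0 h dh : C1_nonneg h dh -> h 0 = 0 -> forall eps, 0 < eps ->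
  exists d, 0 < d /\ forall v, 0 < v < d -> Rabs (h v / v - dh 0) < eps.
Proof.
  intros [H1 _] H0 eps He. destruct (within_eps _ _ _ (H1 0 (Rle_refl 0)) eps He) as [d [Hd Hq]].
  exists d; split; auto. intros v Hv. specialize (Hq v). rewrite H0, !Rminus_0_r in Hq.
  apply Hq. rewrite Rabs_right; lra. split; lra.
Qed.

Lemma W_derive m (U : R -> R) x : (forall y, y < 0 -> 0 < U y) -> ex_derive U x -> x < 0 ->
  is_derive (fun y => rpow (U y) m) x (m * Rpower (U x) (m - 1) * Derive U x).
Proof.
  intros Hpos Hd Hx.
  apply is_derive_ext_loc with (fun y => Rpower (U y) m).
  { exists (mkposreal (-x) ltac:(lra)). intros y Hy. apply (proj1 (ball_R _ _ _)) in Hy. simpl in Hy.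
    apply Rabs_def2 in Hy. rewrite rpow_pos; auto. apply Hpos. lra. }
  replace (m * Rpower (U x) (m - 1) * Derive U x) with (scal (Derive U x) (m * Rpower (U x) (m - 1))).
  2: { unfold scal; simpl; unfold mult; simpl. ring. }
  apply (is_derive_comp (fun u => Rpower u m) U x). apply is_derive_Rpower. apply Hpos; auto.
  apply Derive_correct. auto.
Qed.

Lemma W_derive0 m (U : R -> R) x : (forall y, 0 <= y -> U y = 0) -> 0 < x ->
  Derive (fun y => rpow (U y) m) x = 0.
Proof.
  intros H0 Hx. rewrite (Derive_ext_loc _ (fun _ => 0)). apply Derive_const.
  exists (mkposreal x Hx). intros y Hy. apply (proj1 (ball_R _ _ _)) in Hy. simpl in Hy.
  apply Rabs_def2 in Hy. rewrite H0 by lra. apply rpow_0.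
Qed.


Definition qq (t : R) := 6 * t * (1 - t).
Definition ds (t : R) := (qq t + Rabs (qq t)) / 2.
Definition sr (t : R) := RInt ds 0 t.

Lemma ds_cont t : continuous ds t.
Proof.
  apply continuity_pt_filterlim. unfold ds, qq.
  apply continuity_pt_mult. 2: apply continuity_pt_const; intros ? ?; auto.
  apply continuity_pt_plus.
  - apply continuity_pt_mult. apply continuity_pt_mult. apply continuity_pt_const; intros ? ?; auto.
    apply continuity_pt_id. apply continuity_pt_minus. apply continuity_pt_const; intros ? ?; auto. apply continuity_pt_id.
  - apply (continuity_pt_comp (fun t => 6 * t * (1 - t)) Rabs).
    apply continuity_pt_mult. apply continuity_pt_mult. apply continuity_pt_const; intros ? ?; auto.
    apply continuity_pt_id. apply continuity_pt_minus. apply continuity_pt_const; intros ? ?; auto. apply continuity_pt_id.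
    apply Rcontinuity_abs.
Qed.

Lemma ds_nonneg t : 0 <= ds t.
Proof. unfold ds. pose proof (Rle_abs (- qq t)). rewrite Rabs_Ropp in H. lra. Qed.

Lemma ds_out t : (t <= 0 \/ 1 <= t) -> ds t = 0.
Proof. intros H. unfold ds, qq. rewrite Rabs_left1. lra. destruct H; nra. Qed.

Lemma ds_in t : 0 <= t <= 1 -> ds t = qq t.
Proof. intros H. unfold ds, qq. rewrite Rabs_right. lra. nra. Qed.

Lemma ex_RInt_ds a b : ex_RInt ds a b.
Proof. apply ex_RInt_cont. intros; apply ds_cont. Qed.

Lemma sr_derive t : is_derive sr t (ds t).
Proof.
  apply (is_derive_RInt ds sr 0 t). 2: apply ds_cont.
  exists (mkposreal 1 ltac:(lra)). intros b _. unfold sr. apply (RInt_correct (V:=R_CompleteNormedModule)). apply ex_RInt_ds.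
Qed.

Lemma sr_cont t : continuous sr t.
Proof. apply (ex_derive_continuous (K:=R_AbsRing) (V:=R_NormedModule)). eexists. apply sr_derive. Qed.

Lemma RInt_zero_on f a b : (forall x, Rmin a b < x < Rmax a b -> f x = 0) -> RInt f a b = 0.
Proof.
  intros H. rewrite (RInt_ext f (fun _ => 0)) by auto. rewrite RInt_const.
  unfold scal; simpl; unfold mult; simpl. ring.
Qed.

Lemma sr_le0 t : t <= 0 -> sr t = 0.
Proof.
  intros Ht. unfold sr. apply RInt_zero_on. intros x Hx. apply ds_out. left.
  unfold Rmin, Rmax in Hx; destruct Rle_dec in Hx; lra.
Qed.

Lemma sr_1 : sr 1 = 1.
Proof.
  unfold sr. rewrite (RInt_ext ds qq).
  2: { intros x Hx. apply ds_in. unfold Rmin, Rmax in Hx; destruct Rle_dec in Hx; lra. }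
  assert (HI : is_RInt qq 0 1 (minus ((fun x => 3 * x^2 - 2 * x^3) 1) ((fun x => 3 * x^2 - 2 * x^3) 0))).
  { apply (is_RInt_derive (V:=R_CompleteNormedModule) (fun x => 3 * x^2 - 2 * x^3) qq).
    - intros x _. unfold qq. auto_derive; auto. ring.
    - intros x _. apply continuity_pt_filterlim. unfold qq. reg. }
  rewrite (is_RInt_unique _ _ _ _ HI).
  unfold minus, plus, opp; simpl. ring.
Qed.

Lemma sr_ge1 t : 1 <= t -> sr t = 1.
Proof.
  intros Ht. unfold sr. rewrite <- (RInt_Chasles ds 0 1 t) by apply ex_RInt_ds.
  fold (sr 1). rewrite sr_1. rewrite RInt_zero_on. unfold plus; simpl. ring.
  intros x Hx. apply ds_out. right. unfold Rmin, Rmax in Hx; destruct Rle_dec in Hx; lra.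
Qed.

Lemma sr_bounds t : 0 <= sr t <= 1.
Proof.
  destruct (Rle_dec t 0). rewrite sr_le0; lra.
  destruct (Rle_dec 1 t). rewrite sr_ge1; lra.
  assert (E : sr 1 = plus (sr t) (RInt ds t 1)).
  { unfold sr. rewrite RInt_Chasles; auto; apply ex_RInt_ds. }
  rewrite sr_1 in E. unfold plus in E; simpl in E.
  assert (0 <= sr t). { apply RInt_ge_0. lra. apply ex_RInt_ds. intros; apply ds_nonneg. }
  assert (0 <= RInt ds t 1). { apply RInt_ge_0. lra. apply ex_RInt_ds. intros; apply ds_nonneg. }
  lra.
Qed.

Lemma Derive_sr y : Derive (fun x => sr x) y = ds y.
Proof. apply is_derive_unique. apply sr_derive. Qed.
Lemma ex_derive_sr y : ex_derive (fun x => sr x) y.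
Proof. eexists. apply sr_derive. Qed.

Lemma phi_derive g a e x : e <> 0 -> is_derive (fun x => exp (g * x) * (sr ((x - a) / e) * sr (2 - x))) x
  (g * exp (g * x) * (sr ((x - a) / e) * sr (2 - x)) + exp (g * x) * (ds ((x - a)/e) / e * sr (2 - x) - sr ((x - a)/e) * ds (2 - x))).
Proof.
  intros He. auto_derive. split; [apply ex_derive_sr|split; [apply ex_derive_sr|auto]].
  rewrite !Derive_sr. unfold Rminus, Rdiv. ring.
Qed.


Lemma cpt_lin a e x : continuity_pt (fun x => (x - a) / e) x.
Proof. reg. Qed.
Lemma cpt_lin2 x : continuity_pt (fun x => 2 - x) x.
Proof. reg. Qed.

Lemma cpt_sr1 a e x : continuity_pt (fun x => sr ((x - a) / e)) x.
Proof. apply (continuity_pt_comp (fun x => (x - a) / e) sr). apply cpt_lin. apply pt_cont, sr_cont. Qed.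
Lemma cpt_sr2 x : continuity_pt (fun x => sr (2 - x)) x.
Proof. apply (continuity_pt_comp (fun x => 2 - x) sr). apply cpt_lin2. apply pt_cont, sr_cont. Qed.
Lemma cpt_ds1 a e x : continuity_pt (fun x => ds ((x - a) / e)) x.
Proof. apply (continuity_pt_comp (fun x => (x - a) / e) ds). apply cpt_lin. apply pt_cont, ds_cont. Qed.
Lemma cpt_ds2 x : continuity_pt (fun x => ds (2 - x)) x.
Proof. apply (continuity_pt_comp (fun x => 2 - x) ds). apply cpt_lin2. apply pt_cont, ds_cont. Qed.
Lemma cpt_exp g x : continuity_pt (fun x => exp (g * x)) x.
Proof. reg. Qed.

Definition phit g a e x := exp (g * x) * (sr ((x - a) / e) * sr (2 - x)).
Definition dphit g a e x := g * exp (g * x) * (sr ((x - a) / e) * sr (2 - x)) +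
   exp (g * x) * (ds ((x - a)/e) / e * sr (2 - x) - sr ((x - a)/e) * ds (2 - x)).

Lemma dphit_cont g a e x : continuity_pt (dphit g a e) x.
Proof.
  unfold dphit. apply continuity_pt_plus.
  apply continuity_pt_mult. apply continuity_pt_mult. apply continuity_pt_const; intros ? ?; auto. apply cpt_exp.
  apply continuity_pt_mult. apply cpt_sr1. apply cpt_sr2.
  apply continuity_pt_mult. apply cpt_exp. apply continuity_pt_minus.
  apply continuity_pt_mult. apply continuity_pt_mult. apply cpt_ds1.
  apply continuity_pt_const; intros ? ?; auto. apply cpt_sr2.
  apply continuity_pt_mult. apply cpt_sr1. apply cpt_ds2.
Qed.

Lemma Derive_phit g a e x : e <> 0 -> Derive (phit g a e) x = dphit g a e x.
Proof. intros He. apply is_derive_unique. apply phi_derive. auto. Qed.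

Lemma phit_test g xi e : 0 < e <= 1 -> xi < 0 -> test_fun (phit g (xi - e) e) (xi - e) 2.
Proof.
  intros He Hxi. split. lra. split.
  - intros x [Hx|Hx]; unfold phit.
    rewrite (sr_le0 ((x - (xi - e)) / e)). ring.
    apply Rmult_le_reg_r with e. lra. unfold Rdiv. rewrite Rmult_assoc, Rinv_l by lra. lra.
    rewrite (sr_le0 (2 - x)) by lra. ring.
  - intros x. split. eexists. apply phi_derive. lra.
    apply continuous_ext with (dphit g (xi - e) e). intros y. rewrite Derive_phit; auto. lra.
    apply cont_pt. apply dphit_cont.
Qed.

Lemma s1_one a e x : 0 < e -> a + e <= x -> sr ((x - a) / e) = 1 /\ ds ((x - a) / e) = 0.
Proof.
  intros He Hx. assert (1 <= (x - a) / e).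
  { apply Rmult_le_reg_r with e. lra. unfold Rdiv. rewrite Rmult_assoc, Rinv_l by lra. lra. }
  split. apply sr_ge1; auto. apply ds_out; auto.
Qed.
Lemma s2_one x : x <= 1 -> sr (2 - x) = 1 /\ ds (2 - x) = 0.
Proof. intros Hx. split. apply sr_ge1; lra. apply ds_out; lra. Qed.

Lemma flux_cont m p (U : R -> R) x : 1 < p -> (forall y, y < 0 -> 0 < U y) ->
  (forall y, y < 0 -> ex_derive U y) -> (forall y, y < 0 -> ex_derive (Derive U) y) ->
  (forall y, continuous U y) -> x < 0 -> continuous (flux m p U) x.
Proof.
  intros Hp Hpos Hd Hd2 HUc Hx.
  apply continuous_ext_loc with (g := fun y => phip p (m * Rpower (U y) (m - 1) * Derive U y)).
  { exists (mkposreal (-x) ltac:(lra)). intros y Hy. apply (proj1 (ball_R _ _ _)) in Hy. simpl in Hy.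
    apply Rabs_def2 in Hy. unfold flux. f_equal. symmetry. apply is_derive_unique. apply W_derive; [auto | apply Hd; lra | lra]. }
  apply continuous_comp with (g := phip p). 2: apply phip_cont; auto.
  apply cont_pt. apply continuity_pt_mult. apply continuity_pt_mult. apply continuity_pt_const; intros ? ?; auto.
  apply (continuity_pt_comp U (fun u => Rpower u (m - 1))). apply pt_cont; auto.
  apply pt_cont. apply Rpower_cont. apply Hpos; auto.
  apply pt_cont. apply (ex_derive_continuous (K:=R_AbsRing) (V:=R_NormedModule)). apply Hd2; auto.
Qed.

Lemma flux_pos0 m p (U : R -> R) x : (forall y, 0 <= y -> U y = 0) -> 0 < x -> flux m p U x = 0.
Proof. intros H Hx. unfold flux. rewrite W_derive0; auto. apply phip_0. Qed.


Lemma approx_identity m p gamma c h dh (U : R -> R)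
  (Hp : 1 < p) (Hh : C1_nonneg h dh) (H0 : h 0 = 0)
  (HUc : forall x, continuous U x) (HU0 : forall x, 0 <= x -> U x = 0) (HUp : forall x, x < 0 -> 0 < U x)
  (HUd : forall x, x < 0 -> ex_derive U x) (HUd2 : forall x, x < 0 -> ex_derive (Derive U) x)
  (Hw : tw_weak_solution m p gamma h c U) xi e (He : 0 < e <= 1) (Hxi : xi < 0) :
  c * (gamma * RInt (fun x => U x * exp (gamma * x) * sr ((x - (xi - e)) / e)) (xi - e) xi
       + RInt (fun x => U x * exp (gamma * x) * (ds ((x - (xi - e)) / e) / e)) (xi - e) xi
       + gamma * RInt (fun x => U x * exp (gamma * x)) xi 0)
  = - RInt (fun x => flux m p U x * exp (gamma * x) * (ds ((x - (xi - e)) / e) / e)) (xi - e) xi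
    + RInt (fun x => h (U x) * exp (gamma * x) * sr ((x - (xi - e)) / e)) (xi - e) xi
    + RInt (fun x => h (U x) * exp (gamma * x)) xi 0.
Proof.
  destruct (Hw _ _ _ (phit_test gamma xi e He Hxi)) as [E1 [E2 [E3 [E4 Eq]]]].
  set (a := xi - e) in *.
  assert (D : forall x, Derive (phit gamma a e) x = dphit gamma a e x).
  { intros; apply Derive_phit; lra. }
  assert (HU0' : forall x, 0 <= U x).
  { intros x. destruct (Rlt_dec x 0). left; auto. rewrite HU0; lra. }
  assert (ChU : forall x, continuous (fun y => U y * exp (gamma * y)) x).
  { intros x. apply cont_pt. apply continuity_pt_mult. apply pt_cont; auto. apply cpt_exp. }
  assert (ChH : forall x, continuous (fun y => h (U y) * exp (gamma * y)) x).
  { intros x. apply cont_pt. apply continuity_pt_mult. apply pt_cont. apply (hU_cont h dh); auto. apply cpt_exp. }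
  assert (Ha : a < xi) by (unfold a; lra).
  assert (A1 : RInt (fun x => U x * Derive (phit gamma a e) x) a 2 =
     gamma * RInt (fun x => U x * exp (gamma * x) * sr ((x - a) / e)) a xi
       + RInt (fun x => U x * exp (gamma * x) * (ds ((x - a) / e) / e)) a xi
       + gamma * RInt (fun x => U x * exp (gamma * x)) xi 0).
  { rewrite (split2R _ a xi 2) by (auto; lra). rewrite (split2R _ xi 0 2).
    2: lra. 2: apply (ex_RInt_sub _ a 2); auto; lra.
    rewrite (RInt_zero_onR _ 0 2). 2: lra. 2: { intros x Hx. rewrite HU0; lra. }
    rewrite (RInt_extR _ (fun x => gamma * (U x * exp (gamma * x)) ) xi 0); [|lra|].
    2: { intros x Hx. rewrite D. unfold dphit. destruct (s1_one a e x ltac:(lra) ltac:(unfold a; lra)) as [-> ->].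
         destruct (s2_one x ltac:(lra)) as [-> ->]. field. lra. }
    rewrite (RInt_extR _ (fun x => gamma * (U x * exp (gamma * x) * sr ((x - a) / e)) + U x * exp (gamma * x) * (ds ((x - a) / e) / e)) a xi); [|lra|].
    2: { intros x Hx. rewrite D. unfold dphit. destruct (s2_one x ltac:(lra)) as [-> ->]. field. lra. }
    rewrite RInt_plusR, RInt_scalR, RInt_scalR. lra.
    apply ex_RInt_cont; intros; apply ChU.
    apply ex_RInt_cont; intros; apply cont_pt. apply continuity_pt_mult. apply pt_cont; auto. apply cpt_sr1.
    apply ex_RInt_scalR. apply ex_RInt_cont; intros; apply cont_pt. apply continuity_pt_mult. apply pt_cont; auto. apply cpt_sr1.
    apply ex_RInt_cont; intros; apply cont_pt. apply continuity_pt_mult. apply pt_cont; auto.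
    apply continuity_pt_mult. apply cpt_ds1. apply continuity_pt_const; intros ? ?; auto. }
  assert (A4 : RInt (fun x => h (U x) * phit gamma a e x) a 2 =
     RInt (fun x => h (U x) * exp (gamma * x) * sr ((x - a) / e)) a xi
       + RInt (fun x => h (U x) * exp (gamma * x)) xi 0).
  { rewrite (split2R _ a xi 2) by (auto; lra). rewrite (split2R _ xi 0 2).
    2: lra. 2: apply (ex_RInt_sub _ a 2); auto; lra.
    rewrite (RInt_zero_onR _ 0 2). 2: lra. 2: { intros x Hx. rewrite HU0, H0; lra. }
    rewrite (RInt_extR _ (fun x => h (U x) * exp (gamma * x)) xi 0); [|lra|].
    2: { intros x Hx. unfold phit. rewrite (proj1 (s1_one a e x ltac:(lra) ltac:(unfold a; lra))).
         rewrite (proj1 (s2_one x ltac:(lra))). ring. }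
    rewrite (RInt_extR _ (fun x => h (U x) * exp (gamma * x) * sr ((x - a) / e)) a xi); [|lra|].
    2: { intros x Hx. unfold phit. rewrite (proj1 (s2_one x ltac:(lra))). ring. }
    lra. }
  assert (A23 : - RInt (fun x => flux m p U x * Derive (phit gamma a e) x) a 2
                + gamma * RInt (fun x => flux m p U x * phit gamma a e x) a 2 =
                - RInt (fun x => flux m p U x * exp (gamma * x) * (ds ((x - a) / e) / e)) a xi).
  { set (G := fun x => gamma * (flux m p U x * phit gamma a e x) - flux m p U x * Derive (phit gamma a e) x).
    assert (EG : ex_RInt G a 2). { apply ex_RInt_minusR; auto. apply ex_RInt_scalR; auto. }
    assert (RG : RInt G a 2 = - RInt (fun x => flux m p U x * Derive (phit gamma a e) x) a 2
                + gamma * RInt (fun x => flux m p U x * phit gamma a e x) a 2).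
    { unfold G. rewrite RInt_minusR, RInt_scalR; auto. lra. apply ex_RInt_scalR; auto. }
    rewrite <- RG. rewrite (split2R _ a xi 2) by (auto; lra).
    rewrite (RInt_zero_onR _ xi 2). 2: lra.
    2: { intros x Hx. unfold G. rewrite D. unfold dphit, phit. destruct (Rle_dec x 1).
         destruct (s1_one a e x ltac:(lra) ltac:(unfold a; lra)) as [-> ->].
         destruct (s2_one x ltac:(lra)) as [-> ->]. field. lra.
         rewrite flux_pos0; auto. ring. lra. }
    rewrite (RInt_extR _ (fun x => -1 * (flux m p U x * exp (gamma * x) * (ds ((x - a) / e) / e))) a xi); [|lra|].
    2: { intros x Hx. unfold G. rewrite D. unfold dphit, phit. destruct (s2_one x ltac:(lra)) as [-> ->]. field. lra. }
    rewrite (RInt_scalR (fun x => flux m p U x * exp (gamma * x) * (ds ((x - a) / e) / e)) (-1)).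
    2: { apply ex_RInt_cont. intros z Hz. rewrite Rmin_left, Rmax_right in Hz by lra.
         apply cont_pt. apply continuity_pt_mult. apply continuity_pt_mult.
         apply pt_cont. apply (flux_cont m p U z); auto. lra. apply cpt_exp.
         apply continuity_pt_mult. apply cpt_ds1. apply continuity_pt_const; intros ? ?; auto. }
    ring. }
  rewrite A1 in Eq. rewrite A4 in Eq. lra.
Qed.


Lemma ramp_int xi e : 0 < e -> RInt (fun x => ds ((x - (xi - e)) / e) / e) (xi - e) xi = 1.
Proof.
  intros He.
  assert (HI : is_RInt (fun x => ds ((x - (xi - e)) / e) / e) (xi - e) xi
           (minus ((fun x => sr ((x - (xi - e)) / e)) xi) ((fun x => sr ((x - (xi - e)) / e)) (xi - e)))).
  { apply (is_RInt_derive (V:=R_CompleteNormedModule) (fun x => sr ((x - (xi - e)) / e)) (fun x => ds ((x - (xi - e)) / e) / e)).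
    - intros x _. auto_derive. apply ex_derive_sr. rewrite Derive_sr. unfold Rminus, Rdiv. ring.
    - intros x _. apply cont_pt. apply continuity_pt_mult. apply cpt_ds1. apply continuity_pt_const; intros ? ?; auto. }
  rewrite (is_RInt_unique _ _ _ _ HI). unfold minus, plus, opp; simpl.
  replace ((xi - (xi - e)) / e) with 1 by (field; lra).
  replace ((xi - e - (xi - e)) / e) with 0 by (field; lra).
  rewrite sr_1, sr_le0 by lra. ring.
Qed.

Lemma ramp_avg (f : R -> R) xi e eta : 0 < e ->
  (forall x, xi - e <= x <= xi -> continuous f x) ->
  (forall x, xi - e <= x <= xi -> Rabs (f x - f xi) <= eta) ->
  Rabs (RInt (fun x => f x * (ds ((x - (xi - e)) / e) / e)) (xi - e) xi - f xi) <= eta.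
Proof.
  intros He Hc Hb.
  set (r := fun x => ds ((x - (xi - e)) / e) / e).
  assert (Hr : forall x, 0 <= r x). { intros; unfold r. apply Rmult_le_pos. apply ds_nonneg. left; apply Rinv_0_lt_compat; lra. }
  assert (Er : ex_RInt r (xi - e) xi).
  { apply ex_RInt_cont. intros; apply cont_pt. apply continuity_pt_mult. apply cpt_ds1. apply continuity_pt_const; intros ? ?; auto. }
  assert (Ef : ex_RInt (fun x => f x * r x) (xi - e) xi).
  { apply ex_RInt_cont. intros z Hz. rewrite Rmin_left, Rmax_right in Hz by lra. apply cont_pt. apply continuity_pt_mult. apply pt_cont; auto.
    apply continuity_pt_mult. apply cpt_ds1. apply continuity_pt_const; intros ? ?; auto. }
  assert (R1 : RInt r (xi - e) xi = 1) by (apply ramp_int; auto).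
  assert (Ed : ex_RInt (fun x => f xi * r x) (xi - e) xi) by (apply ex_RInt_scalR; auto).
  assert (Eq : RInt (fun x => f x * r x) (xi - e) xi - f xi = RInt (fun x => f x * r x - f xi * r x) (xi - e) xi).
  { rewrite RInt_minusR, RInt_scalR, R1; auto. ring. }
  change (Rabs (RInt (fun x => f x * r x) (xi - e) xi - f xi) <= eta). rewrite Eq. apply Rabs_le. split.
  - rewrite <- (Rmult_1_r eta) at 1. rewrite <- R1. rewrite Ropp_mult_distr_l. rewrite <- RInt_scalR; auto.
    apply RInt_le. lra. apply ex_RInt_scalR; auto. apply ex_RInt_minusR; auto.
    intros x Hx. specialize (Hb x ltac:(lra)). specialize (Hr x). apply Rabs_le_between in Hb. nra.
  - rewrite <- (Rmult_1_r eta). rewrite <- R1. rewrite <- RInt_scalR; auto.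
    apply RInt_le. lra. apply ex_RInt_minusR; auto. apply ex_RInt_scalR; auto.
    intros x Hx. specialize (Hb x ltac:(lra)). specialize (Hr x). apply Rabs_le_between in Hb. nra.
Qed.

Lemma small_int (g : R -> R) a b B : a <= b -> ex_RInt g a b -> (forall x, a <= x <= b -> Rabs (g x) <= B) ->
  Rabs (RInt g a b) <= (b - a) * B.
Proof. intros. apply abs_RInt_le_const; auto. Qed.

Lemma zero_of_small D K : (forall eta, 0 < eta <= 1 -> Rabs D <= K * eta) -> D = 0.
Proof.
  intros H. destruct (Req_dec D 0) as [|Hne]; auto. exfalso.
  assert (HD : 0 < Rabs D) by (apply Rabs_pos_lt; auto).
  pose proof (H 1 ltac:(lra)) as H1.
  set (eta := Rmin 1 (Rabs D / (2 * K))).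
  assert (HK : 0 < K) by lra.
  assert (He : 0 < eta). { apply Rmin_pos. lra. apply Rdiv_lt_0_compat; lra. }
  specialize (H eta (conj He (Rmin_l _ _))).
  assert (K * eta <= Rabs D / 2).
  { apply Rle_trans with (K * (Rabs D / (2 * K))). apply Rmult_le_compat_l. lra. apply Rmin_r. right; field; lra. }
  lra.
Qed.

Lemma Z_identity m p gamma c h dh (U : R -> R)
  (Hp : 1 < p) (Hh : C1_nonneg h dh) (H0 : h 0 = 0)
  (HUc : forall x, continuous U x) (HU0 : forall x, 0 <= x -> U x = 0) (HUp : forall x, x < 0 -> 0 < U x)
  (HUd : forall x, x < 0 -> ex_derive U x) (HUd2 : forall x, x < 0 -> ex_derive (Derive U) x)
  (Hw : tw_weak_solution m p gamma h c U) xi (Hxi : xi < 0) :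
  c * (U xi * exp (gamma * xi)) + flux m p U xi * exp (gamma * xi) =
  RInt (fun x => h (U x) * exp (gamma * x)) xi 0 - c * gamma * RInt (fun x => U x * exp (gamma * x)) xi 0.
Proof.
  assert (HU0' : forall x, 0 <= U x).
  { intros x. destruct (Rlt_dec x 0). left; auto. rewrite HU0; lra. }
  set (f1 := fun x => U x * exp (gamma * x)).
  set (f2 := fun x => flux m p U x * exp (gamma * x)).
  set (f3 := fun x => h (U x) * exp (gamma * x)).
  assert (C1 : forall x, continuous f1 x).
  { intros x. apply cont_pt. apply continuity_pt_mult. apply pt_cont; auto. apply cpt_exp. }
  assert (C3 : forall x, continuous f3 x).
  { intros x. apply cont_pt. apply continuity_pt_mult. apply pt_cont. apply (hU_cont h dh); auto. apply cpt_exp. }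
  assert (C2 : forall x, x < 0 -> continuous f2 x).
  { intros x Hx. apply cont_pt. apply continuity_pt_mult. apply pt_cont. apply flux_cont; auto. apply cpt_exp. }
  apply Rminus_diag_uniq.
  apply zero_of_small with (K := Rabs c + 1 + Rabs (c * gamma) * (Rabs (f1 xi) + 1) + Rabs (f3 xi) + 1).
  intros eta Heta.
  destruct (cont_eps f1 xi (C1 xi) eta ltac:(lra)) as [d1 [Hd1 B1]].
  destruct (cont_eps f2 xi (C2 xi Hxi) eta ltac:(lra)) as [d2 [Hd2 B2]].
  destruct (cont_eps f3 xi (C3 xi) eta ltac:(lra)) as [d3 [Hd3 B3]].
  set (e := Rmin (Rmin eta (-xi)) (Rmin d1 (Rmin d2 d3)) / 2).
  assert (He : 0 < e <= 1 /\ e < d1 /\ e < d2 /\ e < d3 /\ e <= eta /\ e < -xi).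
  { unfold e. pose proof (Rmin_l (Rmin eta (-xi)) (Rmin d1 (Rmin d2 d3))).
    pose proof (Rmin_r (Rmin eta (-xi)) (Rmin d1 (Rmin d2 d3))).
    pose proof (Rmin_l eta (-xi)). pose proof (Rmin_r eta (-xi)).
    pose proof (Rmin_l d1 (Rmin d2 d3)). pose proof (Rmin_r d1 (Rmin d2 d3)).
    pose proof (Rmin_l d2 d3). pose proof (Rmin_r d2 d3).
    assert (0 < Rmin (Rmin eta (-xi)) (Rmin d1 (Rmin d2 d3))).
    { apply Rmin_pos; apply Rmin_pos; try lra. apply Rmin_pos; lra. }
    lra. }
  destruct He as [He [He1 [He2 [He3 [He4 He5]]]]].
  pose proof (approx_identity m p gamma c h dh U Hp Hh H0 HUc HU0 HUp HUd HUd2 Hw xi e He Hxi) as Id.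
  assert (Near : forall x, xi - e <= x <= xi -> Rabs (x - xi) < e + e/2).
  { intros x Hx. rewrite Rabs_left1 by lra. lra. }
  assert (I2 := ramp_avg f1 xi e eta ltac:(lra)).
  specialize (I2 (fun x _ => C1 x)).
  assert (I2b : forall x, xi - e <= x <= xi -> Rabs (f1 x - f1 xi) <= eta).
  { intros x Hx. left. apply B1. rewrite Rabs_left1 by lra. lra. }
  specialize (I2 I2b).
  assert (I3 := ramp_avg f2 xi e eta ltac:(lra)).
  assert (I3a : forall x, xi - e <= x <= xi -> continuous f2 x). { intros x Hx. apply C2. lra. }
  assert (I3b : forall x, xi - e <= x <= xi -> Rabs (f2 x - f2 xi) <= eta).
  { intros x Hx. left. apply B2. rewrite Rabs_left1 by lra. lra. }
  specialize (I3 I3a I3b).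
  assert (I1 : Rabs (RInt (fun x => f1 x * sr ((x - (xi - e)) / e)) (xi - e) xi) <= e * (Rabs (f1 xi) + 1)).
  { apply Rle_trans with ((xi - (xi - e)) * (Rabs (f1 xi) + 1)); [|right; ring]. apply small_int. lra.
    apply ex_RInt_cont. intros; apply cont_pt. apply continuity_pt_mult. apply pt_cont; auto. apply cpt_sr1.
    intros x Hx. rewrite Rabs_mult. pose proof (sr_bounds ((x - (xi - e)) / e)).
    rewrite (Rabs_right (sr _)) by lra.
    assert (Rabs (f1 x) <= Rabs (f1 xi) + 1).
    { specialize (B1 x ltac:(rewrite Rabs_left1 by lra; lra)).
      pose proof (Rabs_triang_inv (f1 x) (f1 xi)). lra. }
    pose proof (Rabs_pos (f1 x)). nra. }
  assert (I4 : Rabs (RInt (fun x => f3 x * sr ((x - (xi - e)) / e)) (xi - e) xi) <= e * (Rabs (f3 xi) + 1)).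
  { apply Rle_trans with ((xi - (xi - e)) * (Rabs (f3 xi) + 1)); [|right; ring]. apply small_int. lra.
    apply ex_RInt_cont. intros; apply cont_pt. apply continuity_pt_mult. apply pt_cont; auto. apply cpt_sr1.
    intros x Hx. rewrite Rabs_mult. pose proof (sr_bounds ((x - (xi - e)) / e)).
    rewrite (Rabs_right (sr _)) by lra.
    assert (Rabs (f3 x) <= Rabs (f3 xi) + 1).
    { specialize (B3 x ltac:(rewrite Rabs_left1 by lra; lra)).
      pose proof (Rabs_triang_inv (f3 x) (f3 xi)). lra. }
    pose proof (Rabs_pos (f3 x)). nra. }
  unfold f1, f2, f3 in *.
  set (J1 := RInt (fun x => U x * exp (gamma * x) * sr ((x - (xi - e)) / e)) (xi - e) xi) in *.
  set (J2 := RInt (fun x => U x * exp (gamma * x) * (ds ((x - (xi - e)) / e) / e)) (xi - e) xi) in *.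
  set (J3 := RInt (fun x => flux m p U x * exp (gamma * x) * (ds ((x - (xi - e)) / e) / e)) (xi - e) xi) in *.
  set (J4 := RInt (fun x => h (U x) * exp (gamma * x) * sr ((x - (xi - e)) / e)) (xi - e) xi) in *.
  set (K1 := RInt (fun x => U x * exp (gamma * x)) xi 0) in *.
  set (K3 := RInt (fun x => h (U x) * exp (gamma * x)) xi 0) in *.
  set (a1 := U xi * exp (gamma * xi)) in *.
  set (a2 := flux m p U xi * exp (gamma * xi)) in *.
  set (a3 := h (U xi) * exp (gamma * xi)) in *.
  replace (c * a1 + a2 - (K3 - c * gamma * K1)) with (c * (a1 - J2) + (a2 - J3) - c * gamma * J1 + J4) by lra.
  assert (T1 : Rabs (c * (a1 - J2)) <= Rabs c * eta). { rewrite Rabs_mult. apply Rmult_le_compat_l. apply Rabs_pos. rewrite Rabs_minus_sym; auto. }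
  assert (T2 : Rabs (a2 - J3) <= eta). { rewrite Rabs_minus_sym; auto. }
  assert (T3 : Rabs (c * gamma * J1) <= Rabs (c * gamma) * (Rabs a1 + 1) * eta).
  { rewrite Rabs_mult. rewrite Rmult_assoc. apply Rmult_le_compat_l. apply Rabs_pos.
    apply Rle_trans with (e * (Rabs a1 + 1)); auto. pose proof (Rabs_pos a1). nra. }
  assert (T4 : Rabs J4 <= (Rabs a3 + 1) * eta).
  { apply Rle_trans with (e * (Rabs a3 + 1)); auto. pose proof (Rabs_pos a3). nra. }
  pose proof (Rabs_triang (c * (a1 - J2) + (a2 - J3) - c * gamma * J1) J4).
  pose proof (Rabs_triang (c * (a1 - J2) + (a2 - J3)) (- (c * gamma * J1))).
  pose proof (Rabs_triang (c * (a1 - J2)) (a2 - J3)).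
  rewrite Rabs_Ropp in H1. unfold Rminus at 1 in H. 
  assert (Rabs (c * (a1 - J2) + (a2 - J3) - c * gamma * J1 + J4) <= Rabs c * eta + eta + Rabs (c * gamma) * (Rabs a1 + 1) * eta + (Rabs a3 + 1) * eta).
  { unfold Rminus in *. lra. }
  nra.
Qed.


Definition Jf (gamma c : R) (h U : R -> R) (xi : R) :=
  RInt (fun x => h (U x) * exp (gamma * x)) xi 0 - c * gamma * RInt (fun x => U x * exp (gamma * x)) xi 0.

Lemma is_derive_RInt_low (f : R -> R) x : (forall y, continuous f y) ->
  is_derive (fun a => RInt f a 0) x (- f x).
Proof.
  intros Hc. apply (is_derive_RInt' (V:=R_CompleteNormedModule) f (fun a => RInt f a 0) x 0).
  exists (mkposreal 1 ltac:(lra)). intros y _. apply (RInt_correct (V:=R_CompleteNormedModule)).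
  apply ex_RInt_cont. intros; apply Hc. apply Hc.
Qed.

Lemma Jf_derive gamma c h dh (U : R -> R) x : C1_nonneg h dh -> (forall x, continuous U x) -> (forall x, 0 <= U x) ->
  is_derive (Jf gamma c h U) x (- (h (U x) * exp (gamma * x)) + c * gamma * (U x * exp (gamma * x))).
Proof.
  intros Hh HUc HU0. unfold Jf.
  apply is_derive_Reals.
  replace (- (h (U x) * exp (gamma * x)) + c * gamma * (U x * exp (gamma * x))) with
    (- (h (U x) * exp (gamma * x)) - c * gamma * (- (U x * exp (gamma * x)))) by ring.
  apply (derivable_pt_lim_minus (fun xi => RInt (fun x => h (U x) * exp (gamma * x)) xi 0)
           (fun xi => c * gamma * RInt (fun x => U x * exp (gamma * x)) xi 0)).
  - apply is_derive_Reals. apply (is_derive_RInt_low (fun t => h (U t) * exp (gamma * t))). intros y. apply cont_pt. apply continuity_pt_mult. apply pt_cont. apply (hU_cont h dh); auto. apply cpt_exp.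
  - apply (derivable_pt_lim_scal (fun xi => RInt (fun t => U t * exp (gamma * t)) xi 0) (c * gamma) x).
    apply is_derive_Reals. apply (is_derive_RInt_low (fun t => U t * exp (gamma * t))). intros y. apply cont_pt. apply continuity_pt_mult. apply pt_cont; auto. apply cpt_exp.
Qed.

Lemma exp_le_mono a b : a <= b -> exp a <= exp b.
Proof. intros [H|<-]. left; apply exp_increasing; auto. lra. Qed.

Lemma LL_U (U : R -> R) : (forall x, continuous U x) -> U 0 = 0 -> LL U 0.
Proof.
  intros Hc H0 eps He. destruct (cont_eps U 0 (Hc 0) eps He) as [d [Hd H]].
  exists d; split; auto. intros x Hx. rewrite <- H0. apply H. rewrite Rminus_0_r, Rabs_left; lra.
Qed.

Lemma LL_hq h dh (U : R -> R) : C1_nonneg h dh -> h 0 = 0 -> LL U 0 -> (forall x, x < 0 -> 0 < U x) ->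
  LL (fun x => h (U x) / U x) (dh 0).
Proof.
  intros Hh H0 HL Hp eps He. destruct (h_quot0 h dh Hh H0 eps He) as [d [Hd H]].
  destruct (HL d Hd) as [d2 [Hd2 H2]]. exists d2; split; auto.
  intros x Hx. apply H. split. apply Hp; lra. specialize (H2 x Hx). rewrite Rminus_0_r in H2.
  apply Rabs_def2 in H2. lra.
Qed.

Lemma J_bound gamma c h dh (U : R -> R) : 0 <= gamma -> 0 < c -> C1_nonneg h dh -> h 0 = 0 ->
  (forall x, continuous U x) -> (forall x y, x <= y -> U y <= U x) -> (forall x, 0 <= U x) -> U 0 = 0 ->
  exists d K, 0 < d <= 1 /\ 0 <= K /\ forall xi, -d < xi < 0 -> Rabs (Jf gamma c h U xi) <= (- xi) * K * U xi.
Proof.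
  intros Hg Hc Hh H0 HUc Hmon HU0 HU00.
  destruct (h_lip h dh Hh 0 (Rle_refl 0)) as [dl [K0 [Hdl [HK0 Hl]]]].
  destruct (cont_eps U 0 (HUc 0) dl Hdl) as [d0 [Hd0 HU]].
  exists (Rmin d0 1), (K0 + c * gamma). split. split. apply Rmin_pos; lra. apply Rmin_r.
  split. nra. intros xi Hxi. pose proof (Rmin_l d0 1). pose proof (Rmin_r d0 1).
  assert (Hsm : forall x, xi <= x <= 0 -> 0 <= U x <= U xi /\ U x < dl /\ exp (gamma * x) <= 1 /\ 0 < exp (gamma * x)).
  { intros x Hx.
    assert (U xi < dl). { specialize (HU xi ltac:(rewrite Rminus_0_r, Rabs_left; lra)). rewrite HU00, Rminus_0_r in HU.
      apply Rabs_def2 in HU. lra. }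
    pose proof (Hmon xi x ltac:(lra)). pose proof (HU0 x).
    assert (exp (gamma * x) <= 1). { rewrite <- exp_0. apply exp_le_mono. nra. }
    pose proof (exp_pos (gamma * x)). lra. }
  unfold Jf.
  assert (A : Rabs (RInt (fun x => h (U x) * exp (gamma * x)) xi 0) <= (0 - xi) * (K0 * U xi)).
  { apply small_int. lra. apply ex_RInt_cont. intros; apply cont_pt. apply continuity_pt_mult. apply pt_cont. apply (hU_cont h dh); auto. apply cpt_exp.
    intros x Hx. destruct (Hsm x Hx) as [[G1 G2] [G3 [G4 G5]]].
    specialize (Hl (U x) (HU0 x) ltac:(rewrite Rminus_0_r, Rabs_right; lra)). rewrite H0, !Rminus_0_r, (Rabs_right (U x)) in Hl by lra.
    rewrite Rabs_mult, (Rabs_right (exp _)) by lra. pose proof (Rabs_pos (h (U x))). nra. }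
  assert (B : Rabs (RInt (fun x => U x * exp (gamma * x)) xi 0) <= (0 - xi) * U xi).
  { apply small_int. lra. apply ex_RInt_cont. intros; apply cont_pt. apply continuity_pt_mult. apply pt_cont; auto. apply cpt_exp.
    intros x Hx. destruct (Hsm x Hx) as [[G1 G2] [G3 [G4 G5]]].
    rewrite Rabs_mult, (Rabs_right (exp _)), (Rabs_right (U x)) by lra. nra. }
  eapply Rle_trans. apply Rabs_triang. rewrite Rabs_Ropp, Rabs_mult, (Rabs_right (c * gamma)) by nra.
  assert (0 <= c * gamma) by nra. nra.
Qed.

Definition Pf gamma c h (U : R -> R) xi := c - Jf gamma c h U xi * exp (- gamma * xi) / U xi.

Lemma LL_P gamma c h dh (U : R -> R) : 0 <= gamma -> 0 < c -> C1_nonneg h dh -> h 0 = 0 ->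
  (forall x, continuous U x) -> (forall x y, x <= y -> U y <= U x) -> (forall x, 0 <= U x) -> U 0 = 0 ->
  (forall x, x < 0 -> 0 < U x) -> LL (Pf gamma c h U) c.
Proof.
  intros Hg Hc Hh H0 HUc Hmon HU0 HU00 Hp.
  destruct (J_bound gamma c h dh U Hg Hc Hh H0 HUc Hmon HU0 HU00) as [d [K [Hd [HK HJ]]]].
  intros eps He. set (M := K * exp gamma + 1).
  assert (HM : 0 < M). { unfold M. pose proof (exp_pos gamma). nra. }
  exists (Rmin d (eps / M)). split. apply Rmin_pos. lra. apply Rdiv_lt_0_compat; lra.
  intros xi Hxi. pose proof (Rmin_l d (eps / M)). pose proof (Rmin_r d (eps / M)).
  specialize (HJ xi ltac:(lra)). pose proof (Hp xi ltac:(lra)) as HUx.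
  unfold Pf. replace (c - Jf gamma c h U xi * exp (- gamma * xi) / U xi - c) with (- (Jf gamma c h U xi * / U xi * exp (- gamma * xi))) by (field; lra).
  rewrite Rabs_Ropp, !Rabs_mult, (Rabs_right (exp _)) by (left; apply exp_pos).
  rewrite (Rabs_right (/ U xi)) by (left; apply Rinv_0_lt_compat; lra).
  assert (E1 : Rabs (Jf gamma c h U xi) * / U xi <= - xi * K).
  { apply Rmult_le_reg_r with (U xi). lra. rewrite Rmult_assoc, Rinv_l by lra. lra. }
  assert (E2 : exp (- gamma * xi) <= exp gamma). { apply exp_le_mono. nra. }
  assert (E3 : 0 <= Rabs (Jf gamma c h U xi) * / U xi). { apply Rmult_le_pos. apply Rabs_pos. left; apply Rinv_0_lt_compat; lra. }
  pose proof (exp_pos (- gamma * xi)).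
  apply Rle_lt_trans with (- xi * K * exp gamma). nra.
  apply Rle_lt_trans with (- xi * M). unfold M. nra.
  apply Rlt_le_trans with (eps / M * M). apply Rmult_lt_compat_r; lra. right; field; lra.
Qed.

Lemma V_deriv_rel m p gamma c h (U : R -> R) xi : 0 < m -> 1 < p -> 1 < m * (p - 1) ->
  (forall x, x < 0 -> 0 < U x) -> (forall x, x < 0 -> ex_derive U x) ->
  (forall x, x < 0 -> c * (U x * exp (gamma * x)) + flux m p U x * exp (gamma * x) = Jf gamma c h U x) ->
  xi < 0 -> 0 < Pf gamma c h U xi ->
  m * Rpower (U xi) (m - / (p - 1) - 1) * Derive U xi = - Rpower (Pf gamma c h U xi) (/ (p - 1)) /\
  Derive (fun y => m / (m - / (p - 1)) * rpow (U y) (m - / (p - 1))) xi = - Rpower (Pf gamma c h U xi) (/ (p - 1)).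
Proof.
  intros Hm Hp Hmp Hpos Hd HZ Hxi HP.
  set (a := / (p - 1)).
  assert (Ha : 0 < a) by (apply Rinv_0_lt_compat; lra).
  assert (Hma : 0 < m - a). { unfold a. apply Rlt_Rminus. apply Rmult_lt_reg_r with (p - 1). lra. rewrite Rinv_l by lra. lra. }
  set (u := U xi). assert (Hu : 0 < u) by (apply Hpos; auto).
  set (P := Pf gamma c h U xi) in *.
  set (s := m * Rpower u (m - 1) * Derive U xi).
  assert (Hs : Derive (fun y => rpow (U y) m) xi = s). { apply is_derive_unique. apply W_derive; auto. }
  assert (Hflux : flux m p U xi = - u * P).
  { specialize (HZ xi Hxi). unfold P, Pf. fold u.
    assert (E : exp (gamma * xi) * exp (- gamma * xi) = 1). { rewrite <- exp_plus. replace (gamma * xi + - gamma * xi) with 0 by ring. apply exp_0. }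
    assert (flux m p U xi = Jf gamma c h U xi * exp (- gamma * xi) - c * u).
    { rewrite <- HZ. fold u. rewrite Rmult_plus_distr_r. rewrite !Rmult_assoc, E. ring. }
    rewrite H. field. lra. }
  unfold flux in Hflux. rewrite Hs in Hflux.
  assert (Hsneg : s < 0).
  { destruct (Rlt_dec s 0); auto. assert (0 <= phip p s) by (apply phip_nonneg; lra). nra. }
  rewrite phip_neg in Hflux by auto.
  assert (Hs2 : - s = Rpower (u * P) a).
  { unfold a. rewrite <- (Rpower_inv_pow (- s) (p - 1)) by lra. f_equal. lra. }
  assert (Hrel : m * Rpower u (m - a - 1) * Derive U xi = - Rpower P a).
  { replace (m - a - 1) with (- a + (m - 1)) by ring. rewrite Rpower_plus.
    replace (m * (Rpower u (- a) * Rpower u (m - 1)) * Derive U xi) with (Rpower u (- a) * s) by (unfold s; ring).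
    replace s with (- Rpower (u * P) a) by lra. rewrite <- Rpower_mult_distr by lra.
    rewrite Rpower_Ropp. field. apply Rgt_not_eq. apply Rpower_pos. }
  split; auto.
  apply is_derive_unique.
  replace (- Rpower P a) with (m / (m - a) * ((m - a) * Rpower u (m - a - 1) * Derive U xi)).
  2: { rewrite <- Hrel. field. lra. }
  apply (is_derive_scal (fun y => rpow (U y) (m - a))). apply W_derive; auto.
Qed.

Lemma P_deriv m p gamma c h dh (U : R -> R) xi : 0 < m -> 1 < p -> 1 < m * (p - 1) ->
  C1_nonneg h dh -> (forall x, continuous U x) -> (forall x, 0 <= U x) ->
  (forall x, x < 0 -> 0 < U x) -> (forall x, x < 0 -> ex_derive U x) ->
  (forall x, x < 0 -> c * (U x * exp (gamma * x)) + flux m p U x * exp (gamma * x) = Jf gamma c h U x) ->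
  xi < 0 -> 0 < Pf gamma c h U xi ->
  is_derive (Pf gamma c h U) xi
    (h (U xi) / U xi - c * gamma + gamma * (c - Pf gamma c h U xi)
     - Rpower (Pf gamma c h U xi) (/ (p - 1)) * exp (- gamma * xi) *
       (Jf gamma c h U xi / (m * Rpower (U xi) (m - / (p - 1) + 1)))).
Proof.
  intros Hm Hp Hmp Hh HUc HU0 Hpos Hd HZ Hxi HP.
  destruct (V_deriv_rel m p gamma c h U xi Hm Hp Hmp Hpos Hd HZ Hxi HP) as [Hrel _].
  set (a := / (p - 1)) in *.
  assert (Ha : 0 < a) by (apply Rinv_0_lt_compat; lra).
  assert (Hu : 0 < U xi) by (apply Hpos; auto).
  assert (HJ := Jf_derive gamma c h dh U xi Hh HUc HU0).
  assert (HE : is_derive (fun x => c - Jf gamma c h U x * exp (- gamma * x) / U x) xi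
     (- (((- (h (U xi) * exp (gamma * xi)) + c * gamma * (U xi * exp (gamma * xi))) * exp (- gamma * xi)
          + Jf gamma c h U xi * (- gamma * exp (- gamma * xi))) * U xi
         - Jf gamma c h U xi * exp (- gamma * xi) * Derive U xi) / (U xi ^ 2))).
  { auto_derive.
    - split. eexists; exact HJ. split. apply Hd; auto. split; auto. lra.
    - assert (DJ : Derive (fun x => Jf gamma c h U x) xi = - (h (U xi) * exp (gamma * xi)) + c * gamma * (U xi * exp (gamma * xi))) by (apply is_derive_unique; exact HJ). rewrite DJ. change (Derive (fun x => U x) xi) with (Derive U xi). field. lra. }
  unfold Pf at 1. replace (fun xi => c - Jf gamma c h U xi * exp (- gamma * xi) / U xi) with
    (fun x => c - Jf gamma c h U x * exp (- gamma * x) / U x) by reflexivity.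
  eapply is_derive_ext. intros; reflexivity.
  replace (h (U xi) / U xi - c * gamma + gamma * (c - Pf gamma c h U xi) -
   Rpower (Pf gamma c h U xi) a * exp (- gamma * xi) * (Jf gamma c h U xi / (m * Rpower (U xi) (m - a + 1))))
   with (- (((- (h (U xi) * exp (gamma * xi)) + c * gamma * (U xi * exp (gamma * xi))) * exp (- gamma * xi)
          + Jf gamma c h U xi * (- gamma * exp (- gamma * xi))) * U xi
         - Jf gamma c h U xi * exp (- gamma * xi) * Derive U xi) / (U xi ^ 2)); auto.
  assert (E : exp (gamma * xi) * exp (- gamma * xi) = 1). { rewrite <- exp_plus. replace (gamma * xi + - gamma * xi) with 0 by ring. apply exp_0. }
  assert (Eb : Rpower (U xi) (m - a + 1) = Rpower (U xi) (m - a - 1) * (U xi * U xi)).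
  { replace (m - a + 1) with ((m - a - 1) + (1 + 1)) by ring. rewrite !Rpower_plus, Rpower_1; auto. }
  rewrite Eb. replace (Rpower (Pf gamma c h U xi) a) with (- (m * Rpower (U xi) (m - a - 1) * Derive U xi)) by lra. unfold Pf.
  assert (0 < Rpower (U xi) (m - a - 1)) by apply Rpower_pos.
  field_simplify_eq. 2: { repeat split; lra. }
  replace (exp (- gamma * xi)) with (/ exp (gamma * xi)).
  2: { replace (- gamma * xi) with (- (gamma * xi)) by ring. rewrite exp_Ropp. auto. }
  field. apply Rgt_not_eq, exp_pos.
Qed.


Lemma cauchy_mvt (f g df dg : R -> R) a b : a < b ->
  (forall x, a < x < b -> is_derive f x (df x)) -> (forall x, a < x < b -> is_derive g x (dg x)) ->
  (forall x, a <= x <= b -> continuity_pt f x) -> (forall x, a <= x <= b -> continuity_pt g x) ->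
  exists x, a < x < b /\ (g b - g a) * df x = (f b - f a) * dg x.
Proof.
  intros Hab Hf Hg Cf Cg.
  set (pr1 := fun c (H : a < c < b) => exist (fun l => derivable_pt_abs f c l) (df c) (proj1 (is_derive_Reals f c (df c)) (Hf c H))).
  set (pr2 := fun c (H : a < c < b) => exist (fun l => derivable_pt_abs g c l) (dg c) (proj1 (is_derive_Reals g c (dg c)) (Hg c H))).
  destruct (MVT f g a b pr1 pr2 Hab Cf Cg) as [x [Hx E]].
  exists x. split; auto.
Qed.

Lemma LL_eq f a b : LL f a -> a = b -> LL f b.
Proof. intros H <-; auto. Qed.

Lemma LL_exp gamma : LL (fun x => exp (gamma * x)) 1.
Proof.
  apply LL_eq with (exp (gamma * 0)). 2: rewrite Rmult_0_r; apply exp_0.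
  apply (LL_comp (fun x => x) (fun x => exp (gamma * x)) 0 LL_id).
  apply cont_pt. apply cpt_exp.
Qed.

Lemma LL_expn gamma : LL (fun x => exp (- gamma * x)) 1.
Proof. apply LL_exp. Qed.

Lemma LL_Rpow f l a : LL f l -> 0 < l -> LL (fun x => Rpower (f x) a) (Rpower l a).
Proof. intros H Hl. apply (LL_comp f (fun y => Rpower y a) l H). apply Rpower_cont; auto. Qed.

Lemma LL_pos f l : LL f l -> 0 < l -> exists d, 0 < d /\ forall x, -d < x < 0 -> l / 2 < f x.
Proof.
  intros H Hl. destruct (H (l/2) ltac:(lra)) as [d [Hd Hd']]. exists d; split; auto.
  intros x Hx. specialize (Hd' x Hx). apply Rabs_def2 in Hd'. lra.
Qed.

Lemma rpowU_cont0 (U : R -> R) b : 0 < b -> (forall x, continuous U x) -> (forall x, 0 <= U x) -> U 0 = 0 ->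
  continuity_pt (fun x => rpow (U x) b) 0.
Proof.
  intros Hb HUc HU0 HU00. apply pt_cont. apply eps_cont. intros eps He.
  destruct (rpow_small b Hb eps He) as [d [Hd H]].
  destruct (cont_eps U 0 (HUc 0) d Hd) as [d2 [Hd2 H2]]. exists d2; split; auto.
  intros y Hy. rewrite HU00, rpow_0, Rminus_0_r. apply H. split; auto.
  specialize (H2 y Hy). rewrite HU00, Rminus_0_r in H2. apply Rabs_def2 in H2. lra.
Qed.

Lemma Q_limit m p gamma c h dh (U : R -> R) : 0 < m -> 1 < p -> 1 < m * (p - 1) -> 0 < c -> 0 <= gamma ->
  C1_nonneg h dh -> h 0 = 0 ->
  (forall x, continuous U x) -> (forall x y, x <= y -> U y <= U x) -> (forall x, 0 <= x -> U x = 0) ->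
  (forall x, x < 0 -> 0 < U x) -> (forall x, x < 0 -> ex_derive U x) ->
  (forall x, x < 0 -> c * (U x * exp (gamma * x)) + flux m p U x * exp (gamma * x) = Jf gamma c h U x) ->
  LL (fun xi => Jf gamma c h U xi / (m * Rpower (U xi) (m - / (p - 1) + 1)))
     ((dh 0 - c * gamma) / ((m - / (p - 1) + 1) * Rpower c (/ (p - 1)))).
Proof.
  intros Hm Hp Hmp Hc Hg Hh H0 HUc Hmon HU0 Hpos Hd HZ.
  set (a := / (p - 1)).
  assert (Ha : 0 < a) by (apply Rinv_0_lt_compat; lra).
  assert (Hma : 0 < m - a). { unfold a. apply Rlt_Rminus. apply Rmult_lt_reg_r with (p - 1). lra. rewrite Rinv_l by lra. lra. }
  set (b := m - a + 1). assert (Hb : 0 < b) by (unfold b; lra).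
  assert (HU0' : forall x, 0 <= U x). { intros x. destruct (Rlt_dec x 0). left; auto. rewrite HU0; lra. }
  assert (HU00 : U 0 = 0) by (apply HU0; lra).
  assert (LLP := LL_P gamma c h dh U Hg Hc Hh H0 HUc Hmon HU0' HU00 Hpos).
  assert (LLU := LL_U U HUc HU00).
  assert (LLhq := LL_hq h dh U Hh H0 LLU Hpos).
  destruct (LL_pos _ _ LLP Hc) as [d1 [Hd1 HPp]].
  set (R := fun y => exp (gamma * y) * ((h (U y) / U y + - (c * gamma)) * / (b * Rpower (Pf gamma c h U y) a))).
  assert (LLR : LL R ((dh 0 - c * gamma) / (b * Rpower c a))).
  { apply LL_eq with (1 * ((dh 0 + - (c * gamma)) * / (b * Rpower c a))).
    2: { field. split. apply Rgt_not_eq, Rpower_pos. lra. }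
    apply LL_mult. apply LL_exp. apply LL_mult. apply LL_plus. auto. apply LL_const.
    apply LL_inv. apply LL_mult. apply LL_const. apply LL_Rpow; auto.
    apply Rgt_not_eq. apply Rmult_lt_0_compat; auto. apply Rpower_pos. }
  intros eps He. destruct (LLR eps He) as [d [Hdd HR]].
  exists (Rmin d d1). split. apply Rmin_pos; lra.
  intros xi Hxi. pose proof (Rmin_l d d1); pose proof (Rmin_r d d1).
  set (dJ := fun x => - (h (U x) * exp (gamma * x)) + c * gamma * (U x * exp (gamma * x))).
  set (dG := fun x => b * Rpower (U x) (b - 1) * Derive U x).
  destruct (cauchy_mvt (Jf gamma c h U) (fun x => rpow (U x) b) dJ dG xi 0) as [eta [Heta E]].
  - lra.
  - intros x Hx. apply Jf_derive with dh; auto.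
  - intros x Hx. apply W_derive; auto. apply Hd; lra. lra.
  - intros x Hx. apply pt_cont. apply (ex_derive_continuous (K:=R_AbsRing) (V:=R_NormedModule)). eexists. apply Jf_derive with dh; auto.
  - intros x Hx. destruct (Req_dec x 0) as [->|Hx0]. apply rpowU_cont0; auto.
    apply pt_cont. apply (ex_derive_continuous (K:=R_AbsRing) (V:=R_NormedModule)). eexists. apply W_derive; auto. apply Hd; lra. lra.
  - assert (Hf0 : Jf gamma c h U 0 = 0). { unfold Jf. rewrite !RInt_point. unfold zero; simpl. ring. }
    rewrite Hf0, HU00, rpow_0 in E. rewrite rpow_pos in E by (apply Hpos; lra).
    assert (HPe : 0 < Pf gamma c h U eta) by (specialize (HPp eta ltac:(lra)); lra).
    destruct (V_deriv_rel m p gamma c h U eta Hm Hp Hmp Hpos Hd HZ ltac:(lra) HPe) as [Hrel _].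
    fold a in Hrel.
    assert (Hue : 0 < U eta) by (apply Hpos; lra).
    assert (Hux : 0 < U xi) by (apply Hpos; lra).
    assert (HdG : m * dG eta = - b * U eta * Rpower (Pf gamma c h U eta) a).
    { unfold dG. replace (b - 1) with ((m - a - 1) + 1) by (unfold b; ring). rewrite Rpower_plus, Rpower_1 by auto.
      rewrite <- (Ropp_involutive (Rpower _ a)). rewrite <- Hrel. ring. }
    assert (HPa : 0 < Rpower (Pf gamma c h U eta) a) by apply Rpower_pos.
    assert (HRb : 0 < Rpower (U xi) b) by apply Rpower_pos.
    assert (Eq : Jf gamma c h U xi / (m * Rpower (U xi) b) = R eta).
    { unfold R. unfold dJ in E.
      assert (Hm2 : m * dG eta <> 0). { rewrite HdG. apply Rlt_not_eq. assert (0 < b * U eta * Rpower (Pf gamma c h U eta) a). { apply Rmult_lt_0_compat; auto. apply Rmult_lt_0_compat; auto. } lra. }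
      assert (HJx : Jf gamma c h U xi = Rpower (U xi) b * dJ eta / dG eta).
      { unfold dJ. field_simplify_eq. lra. intro Z. apply Hm2. rewrite Z. ring. }
      rewrite HJx. unfold dJ. 
      replace (Rpower (U xi) b * (- (h (U eta) * exp (gamma * eta)) + c * gamma * (U eta * exp (gamma * eta))) / dG eta / (m * Rpower (U xi) b))
        with ((- (h (U eta) * exp (gamma * eta)) + c * gamma * (U eta * exp (gamma * eta))) / (m * dG eta)).
      2: { field. split. intro Z. apply Hm2. rewrite Z. ring. split; lra. }
      rewrite HdG. field. repeat split; lra. }
    rewrite Eq. apply HR. lra.
Qed.


Lemma LL_opp f l : LL f l -> LL (fun x => - f x) (- l).
Proof.
  intros H eps He. destruct (H eps He) as [d [Hd H']]. exists d; split; auto.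
  intros x Hx. replace (- f x - - l) with (- (f x - l)) by ring. rewrite Rabs_Ropp. auto.
Qed.

Lemma locally_left xi d : -d < xi < 0 -> locally xi (fun y => -d < y < 0).
Proof.
  intros H. exists (mkposreal (Rmin (xi + d) (- xi)) ltac:(apply Rmin_pos; lra)).
  intros y Hy. apply (proj1 (ball_R _ _ _)) in Hy. simpl in Hy. apply Rabs_def2 in Hy.
  pose proof (Rmin_l (xi + d) (- xi)); pose proof (Rmin_r (xi + d) (- xi)). lra.
Qed.

Lemma final m p gamma c h dh (U : R -> R) : 0 < m -> 1 < p -> 1 < m * (p - 1) -> 0 < c -> 0 <= gamma ->
  C1_nonneg h dh -> h 0 = 0 ->
  (forall x, continuous U x) -> (forall x y, x <= y -> U y <= U x) -> (forall x, 0 <= x -> U x = 0) ->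
  (forall x, x < 0 -> 0 < U x) -> (forall x, x < 0 -> ex_derive U x) ->
  (forall x, x < 0 -> c * (U x * exp (gamma * x)) + flux m p U x * exp (gamma * x) = Jf gamma c h U x) ->
  let alpha := / (p - 1) in
  let V := fun xi => m / (m - alpha) * rpow (U xi) (m - alpha) in
  filterlim (fun xi => Derive V xi) (at_left 0) (locally (- Rpower c alpha)) /\
  filterlim (fun xi => Derive (Derive V) xi) (at_left 0)
    (locally ((gamma * c - dh 0) * (m - alpha)
              / ((p - 1) * (m - alpha + 1) * Rpower c (1 - alpha)))) /\
  filterlim (fun xi => Derive (fun y => phip p (Derive V y)) xi) (at_left 0)
    (locally ((gamma * c - dh 0) * (m - alpha) / (m - alpha + 1))).
Proof.
  intros Hm Hp Hmp Hc Hg Hh H0 HUc Hmon HU0 Hpos Hd HZ alpha V.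
  assert (Ha : 0 < alpha) by (apply Rinv_0_lt_compat; lra).
  assert (Hma : 0 < m - alpha). { unfold alpha. apply Rlt_Rminus. apply Rmult_lt_reg_r with (p - 1). lra. rewrite Rinv_l by lra. lra. }
  assert (HU0' : forall x, 0 <= U x). { intros x. destruct (Rlt_dec x 0). left; auto. rewrite HU0; lra. }
  assert (HU00 : U 0 = 0) by (apply HU0; lra).
  assert (LLP := LL_P gamma c h dh U Hg Hc Hh H0 HUc Hmon HU0' HU00 Hpos).
  assert (LLU := LL_U U HUc HU00).
  assert (LLhq := LL_hq h dh U Hh H0 LLU Hpos).
  assert (LLQ := Q_limit m p gamma c h dh U Hm Hp Hmp Hc Hg Hh H0 HUc Hmon HU0 Hpos Hd HZ).
  fold alpha in LLQ.
  destruct (LL_pos _ _ LLP Hc) as [d1 [Hd1 HPp]].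
  set (P := Pf gamma c h U) in *.
  assert (HP : forall y, -d1 < y < 0 -> 0 < P y). { intros y Hy. specialize (HPp y Hy). lra. }
  assert (DV : forall y, -d1 < y < 0 -> Derive V y = - Rpower (P y) alpha).
  { intros y Hy. apply (V_deriv_rel m p gamma c h U y Hm Hp Hmp Hpos Hd HZ ltac:(lra) (HP y Hy)). }
  set (dP := fun xi => h (U xi) / U xi - c * gamma + gamma * (c - P xi)
     - Rpower (P xi) alpha * exp (- gamma * xi) * (Jf gamma c h U xi / (m * Rpower (U xi) (m - alpha + 1)))).
  assert (HdP : forall y, -d1 < y < 0 -> is_derive P y (dP y)).
  { intros y Hy. apply (P_deriv m p gamma c h dh U y); auto; try lra. }
  set (l := (dh 0 - c * gamma) / ((m - alpha + 1) * Rpower c alpha)).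
  set (L := dh 0 - c * gamma + gamma * (c - c) - Rpower c alpha * 1 * l).
  assert (LLdP : LL dP L).
  { unfold dP, L. apply LL_plus. 2: apply LL_opp. apply LL_plus. apply LL_plus. auto. apply LL_const.
    apply LL_mult. apply LL_const. apply LL_plus. apply LL_const. apply LL_opp. auto.
    apply LL_mult. apply LL_mult. apply LL_Rpow; auto. apply LL_expn. auto. }
  assert (Hca : 0 < Rpower c alpha) by apply Rpower_pos.
  assert (HL : L = (dh 0 - c * gamma) * (m - alpha) / (m - alpha + 1)).
  { unfold L, l. field. lra. }
  split; [|split].
  - apply LL_filterlim. apply LL_ext with (fun y => - Rpower (P y) alpha).
    exists d1; split; auto. intros; symmetry; apply DV; auto.
    apply LL_opp. apply LL_Rpow; auto.
  - apply LL_filterlim.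
    apply LL_ext with (fun y => - (alpha * Rpower (P y) (alpha - 1) * dP y)).
    { exists d1; split; auto. intros y Hy. symmetry. apply is_derive_unique.
      apply is_derive_ext_loc with (fun y => - Rpower (P y) alpha).
      { generalize (locally_left y d1 Hy). apply filter_imp. intros z Hz. symmetry. apply DV; auto. }
      replace (- (alpha * Rpower (P y) (alpha - 1) * dP y)) with (- (scal (dP y) (alpha * Rpower (P y) (alpha - 1)))).
      2: { unfold scal; simpl; unfold mult; simpl. ring. }
      apply (is_derive_opp (K:=R_AbsRing) (V:=R_NormedModule) (fun y => Rpower (P y) alpha)).
      apply (is_derive_comp (fun u => Rpower u alpha) P y). apply is_derive_Rpower. apply HP; auto. apply HdP; auto. }
    apply LL_eq with (- (alpha * Rpower c (alpha - 1) * L)).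
    apply LL_opp. apply LL_mult. apply LL_mult. apply LL_const. apply LL_Rpow; auto. auto.
    rewrite HL. replace (alpha - 1) with (- (1 - alpha)) by ring. rewrite Rpower_Ropp.
    unfold alpha. field. repeat split; try (apply Rgt_not_eq; apply Rpower_pos); lra.
  - apply LL_filterlim.
    apply LL_ext with (fun y => - dP y).
    { exists d1; split; auto. intros y Hy. symmetry. apply is_derive_unique.
      apply is_derive_ext_loc with (fun y => - P y).
      { generalize (locally_left y d1 Hy). apply filter_imp. intros z Hz. rewrite DV by auto.
        rewrite phip_neg. 2: { pose proof (Rpower_pos (P z) alpha). lra. }
        rewrite Ropp_involutive, Rpower_mult. unfold alpha. rewrite Rinv_l by lra. rewrite Rpower_1. auto. apply HP; auto. }
      apply (is_derive_opp (K:=R_AbsRing) (V:=R_NormedModule) P). apply HdP; auto. }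
    apply LL_eq with (- L). apply LL_opp; auto.
    rewrite HL. field. lra.
Qed.


Theorem mainTheorem11
  (m p : R) (h dh : R -> R) (gstar gamma c : R) (U : R -> R)
  (Hm : 0 < m) (Hp : 1 < p) (Hmp : 1 < m * (p - 1))
  (Hh : reaction_hyp m h dh)
  (Hgstar : 0 < gstar) (Hwf : wavefront_hyp m p h gstar)
  (Hgamma : 0 <= gamma < gstar)
  (Hc : 0 < c) (HU : finite_wavefront_at m p gamma h c U 0) :
  let alpha := / (p - 1) in
  let V := fun xi => m / (m - alpha) * rpow (U xi) (m - alpha) in
  filterlim (fun xi => Derive V xi) (at_left 0) (locally (- Rpower c alpha)) /\
  filterlim (fun xi => Derive (Derive V) xi) (at_left 0)
    (locally ((gamma * c - dh 0) * (m - alpha)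
              / ((p - 1) * (m - alpha + 1) * Rpower c (1 - alpha)))) /\
  filterlim (fun xi => Derive (fun y => phip p (Derive V y)) xi) (at_left 0)
    (locally ((gamma * c - dh 0) * (m - alpha) / (m - alpha + 1))).
Proof.
  pose proof HU as HU'.
  destruct HU' as [HUc [HUmon [_ [HU0 [HUp Hw]]]]].
  destruct Hh as [Hh1 [Hh0 _]].
  destruct (Hwf gamma Hgamma) as [_ [_ Hsm]].
  assert (HUd : forall x, x < 0 -> ex_derive U x).
  { intros x Hx. exact (Hsm c U 0 HU 1%nat x Hx). }
  assert (HUd2 : forall x, x < 0 -> ex_derive (Derive U) x).
  { intros x Hx. exact (Hsm c U 0 HU 2%nat x Hx). }
  assert (HZ : forall x, x < 0 -> c * (U x * exp (gamma * x)) + flux m p U x * exp (gamma * x) = Jf gamma c h U x).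
  { intros x Hx. unfold Jf. apply (Z_identity m p gamma c h dh U); auto. }
  exact (final m p gamma c h dh U Hm Hp Hmp Hc (proj1 Hgamma) Hh1 Hh0 HUc HUmon HU0 HUp HUd HZ).
Qed.
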